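(* Let $X=\{a,b\}$ with $a\ne b$, and consider the commutative unital ring $(\mathcal{P}(X),\Delta,\cap)$, where addition is symmetric difference $B\Delta C=(B\cap C^c)\cup(C\cap B^c)$ (zero $\emptyset$) and multiplication is intersection (unit $X$). The irreducible $\lambda$-quiddities over this ring are exactly, up to cyclic permutation: - $(X,X,X)$; - $(\{a\},\{b\},\{a\},\{b\})$, $(\emptyset,\emptyset,\emptyset,\emptyset)$, $(\{a\},\emptyset,\{a\},\emptyset)$, $(\{b\},\emptyset,\{b\},\emptyset)$; - $(\{a\},\{a\},\{a\},\{a\},\{a\},\{a\})$ and $(\{b\},\{b\},\{b\},\{b\},\{b\},\{b\})$.
   Context: For $a_1,\ldots,a_n$ in a commutative unital ring $A$ (with unit $1$), $M_n(a_1,\ldots,a_n)=\begin{pmatrix}a_n&-1\\1&0\end{pmatrix}\cdots\begin{pmatrix}a_1&-1\\1&0\end{pmatrix}$. An $n$-tuple $(a_1,\ldots,a_n)\in A^n$ is a $\lambda$-quiddity over $A$ if $M_n(a_1,\ldots,a_n)=\pm\mathrm{Id}$. For $(a_1,\ldots,a_n)\in A^n$, $(b_1,\ldots,b_m)\in A^m$, define $(a_1,\ldots,a_n)\oplus(b_1,\ldots,b_m)=(a_1+b_m,a_2,\ldots,a_{n-1},a_n+b_1,b_2,\ldots,b_{m-1})$. Write $(a_1,\ldots,a_n)\sim(b_1,\ldots,b_n)$ if $(b_1,\ldots,b_n)$ is obtained from $(a_1,\ldots,a_n)$ or from $(a_n,\ldots,a_1)$ by a cyclic permutation. A $\lambda$-quiddity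 $(c_1,\ldots,c_n)$ with $n\ge3$ is reducible if there exist a $\lambda$-quiddity $(b_1,\ldots,b_l)$ and a tuple $(a_1,\ldots,a_m)$ with $l,m\ge3$ and $(c_1,\ldots,c_n)\sim(a_1,\ldots,a_m)\oplus(b_1,\ldots,b_l)$; it is irreducible otherwise (by convention $(0,0)$ is reducible). *)

(* Defs.v *)
From HB Require Import structures.
From mathcomp Require Import all_boot all_order all_algebra.
Set Implicit Arguments. Unset Strict Implicit. Unset Printing Implicit Defensive.
Import GRing.Theory.
Local Open Scope ring_scope.

Section Quiddity.
Variable R : comNzRingType.

Definition qmat (a : R) : 'M[R]_2 :=
  \matrix_(i < 2, j < 2)
    (if (i == 0 :> nat) then (if (j == 0 :> nat) then a else -1)
     else (if (j == 0 :> nat) then 1 else 0)).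

Definition Mn (s : seq R) : 'M[R]_2 := foldl (fun M a => qmat a *m M) 1%:M s.

Definition lambda_quiddity (s : seq R) : Prop :=
  Mn s = 1%:M \/ Mn s = - 1%:M.

(* (a_1..a_n) (+) (b_1..b_m) = (a_1+b_m, a_2..a_{n-1}, a_n+b_1, b_2..b_{m-1}) *)
Definition oplus (a b : seq R) : seq R :=
  let n := size a in let m := size b in
  [:: a`_0 + b`_(m.-1)] ++ take (n - 2) (drop 1 a) ++
  [:: a`_(n.-1) + b`_0] ++ take (m - 2) (drop 1 b).

Definition qsim (c d : seq R) : Prop :=
  exists k, d = rot k c \/ d = rot k (rev c).

Definition reducible (c : seq R) : Prop :=
  lambda_quiddity c /\ (3 <= size c)%N /\
  exists a b : seq R, [/\ (3 <= size a)%N, (3 <= size b)%N, lambda_quiddity b &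
                          qsim c (oplus a b)].

(* irreducible lambda-quiddities: size >= 3 (sizes 1 admit no quiddity,
   the only size-2 quiddity (0,0) is reducible by convention) *)
Definition irreducible (c : seq R) : Prop :=
  lambda_quiddity c /\ (3 <= size c)%N /\ ~ reducible c.
End Quiddity.

(* X is modelled by bool, with a := true and b := false. *)
Definition PX := {set bool}.
HB.instance Definition _ := Finite.on PX.

Definition symdiff (B C : PX) : PX := (B :&: ~: C) :|: (C :&: ~: B).
Definition PX0 : PX := set0.
Definition PXopp (B : PX) : PX := B.

Lemma symdiffA : associative symdiff.
Proof. move=> A B C; apply/setP=> x; rewrite !inE.
by case: (x \in A); case: (x \in B); case: (x \in C). Qed.
Lemma symdiffC : commutative symdiff.
Proof. move=> A B; apply/setP=> x; rewrite !inE.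
by case: (x \in A); case: (x \in B). Qed.
Lemma symdiff0 : left_id PX0 symdiff.
Proof. move=> A; apply/setP=> x; rewrite !inE; by case: (x \in A). Qed.
Lemma symdiffN : left_inverse PX0 PXopp symdiff.
Proof. move=> A; apply/setP=> x; rewrite !inE; by case: (x \in A). Qed.

HB.instance Definition _ :=
  GRing.isZmodule.Build PX symdiffA symdiffC symdiff0 symdiffN.

Definition PX1 : PX := setT.
Definition PXmul (B C : PX) : PX := B :&: C.
Lemma PXmulA : associative PXmul.
Proof. by move=> A B C; rewrite /PXmul setIA. Qed.
Lemma PXmulC : commutative PXmul.
Proof. by move=> A B; rewrite /PXmul setIC. Qed.
Lemma PXmul1 : left_id PX1 PXmul.
Proof. by move=> A; rewrite /PXmul setTI. Qed.
Lemma PXmulDl : left_distributive PXmul (@GRing.add PX).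
Proof. move=> A B C; apply/setP=> x; rewrite /PXmul /= /symdiff !inE.
by case: (x \in A); case: (x \in B); case: (x \in C). Qed.
Lemma PX1_neq0 : PX1 != 0 :> PX.
Proof. by apply/eqP=> /setP /(_ true); rewrite !inE. Qed.

HB.instance Definition _ :=
  GRing.Zmodule_isComNzRing.Build PX PXmulA PXmulC PXmul1 PXmulDl PX1_neq0.

Definition sa : PX := [set true].
Definition sb : PX := [set false].
Definition sX : PX := setT.
Definition sE : PX := set0.

Lemma PX_addE (B C : PX) : B + C = (B :&: ~: C) :|: (C :&: ~: B). Proof. by []. Qed.
Lemma PX_mulE (B C : PX) : B * C = B :&: C. Proof. by []. Qed.
Lemma PX_oneE : 1 = sX. Proof. by []. Qed.
Lemma PX_zeroE : 0 = sE. Proof. by []. Qed.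

(* Main.v *)
Require Import Defs.
From mathcomp Require Import all_boot all_order all_algebra zify.
Set Implicit Arguments. Unset Strict Implicit. Unset Printing Implicit Defensive.
Import GRing.Theory.
Local Open Scope ring_scope.

Notation pb := (bool * bool)%type.
Definition enc (B : PX) : pb := (true \in B, false \in B).
Definition dec (p : pb) : PX :=
  match p with
  | (true, true) => sX | (true, false) => sa | (false, true) => sb | (false,false) => sE end.
Definition addp (p q : pb) : pb := (p.1 (+) q.1, p.2 (+) q.2).
Definition mulp (p q : pb) : pb := (p.1 && q.1, p.2 && q.2).

Lemma encD (B C : PX) : enc (B + C) = addp (enc B) (enc C).
Proof.
rewrite /enc /addp PX_addE /= !inE.
by case: (true \in B); case: (true \in C); case: (false \in B); case: (false \in C).
Qed.
Lemma encM (B C : PX) : enc (B * C) = mulp (enc B) (enc C).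
Proof. by rewrite /enc /mulp PX_mulE /= !inE. Qed.
Lemma encN (B : PX) : enc (- B) = enc B.
Proof. by []. Qed.
Lemma enc_inj : injective enc.
Proof.
move=> B C [h1 h2]; apply/setP => -[]; by [rewrite h1 | rewrite h2].
Qed.
Lemma enc1 : enc 1 = (true, true). Proof. by rewrite /enc PX_oneE /sX !inE. Qed.
Lemma enc0 : enc 0 = (false, false). Proof. by rewrite /enc PX_zeroE /sE !inE. Qed.
Lemma encK : cancel dec enc.
Proof.
by move=> [[] []]; rewrite /enc /= ?/sX ?/sa ?/sb ?/sE ?inE.
Qed.
Lemma decK : cancel enc dec.
Proof. by move=> B; apply: enc_inj; rewrite encK. Qed.

Definition q4 (R : Type) := (R * R * R * R)%type.
Definition mk (R : comNzRingType) (x : q4 R) : 'M[R]_2 :=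
  let '(p, q, r, t) := x in
  \matrix_(i < 2, j < 2)
    (if (i == 0 :> nat) then (if (j == 0 :> nat) then p else q)
     else (if (j == 0 :> nat) then r else t)).
Definition st (R : comNzRingType) (x : q4 R) (a : R) : q4 R :=
  let '(p, q, r, t) := x in (a * p - r, a * q - t, p, q).

Lemma qmat_mk (R : comNzRingType) (a : R) x : qmat a *m mk x = mk (st x a).
Proof.
case: x => [[[p q] r] t]; apply/matrixP => i j.
rewrite !mxE !big_ord_recl big_ord0 !mxE /=.
case: i => [[|[|i]] Hi] //; case: j => [[|[|j]] Hj] //=;
  rewrite ?mul1r ?mul0r ?addr0 ?mulN1r //.
Qed.

Lemma mk_inj (R : comNzRingType) : injective (@mk R).
Proof.
move=> [[[p q] r] t] [[[p' q'] r'] t'] h.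
have h00 := congr1 (fun M : 'M[R]_2 => M (@ord0 1) (@ord0 1)) h.
have h01 := congr1 (fun M : 'M[R]_2 => M (@ord0 1) (@ord_max 1)) h.
have h10 := congr1 (fun M : 'M[R]_2 => M (@ord_max 1) (@ord0 1)) h.
have h11 := congr1 (fun M : 'M[R]_2 => M (@ord_max 1) (@ord_max 1)) h.
move: h00 h01 h10 h11; rewrite /= !mxE /= => -> -> -> -> //.
Qed.

Lemma mk1 (R : comNzRingType) : 1%:M = mk ((1 : R), 0, 0, 1).
Proof.
apply/matrixP => i j; rewrite !mxE.
case: i => [[|[|i]] Hi] //; case: j => [[|[|j]] Hj] //=.
Qed.

Lemma foldl_mk (R : comNzRingType) (s : seq R) x :
  foldl (fun M a => qmat a *m M) (mk x) s = mk (foldl (@st R) x s).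
Proof. by elim: s x => [|a s IH] x //=; rewrite qmat_mk IH. Qed.

Lemma Mn_mk (s : seq PX) : Mn s = mk (foldl (@st _) (1, 0, 0, 1) s).
Proof. by rewrite /Mn mk1 foldl_mk. Qed.

Lemma PXoppE (x : PX) : - x = x. Proof. by []. Qed.

Lemma quid_st (s : seq PX) :
  lambda_quiddity s <-> foldl (@st _) (1, 0, 0, 1) s = (1, 0, 0, 1).
Proof.
rewrite /lambda_quiddity Mn_mk mk1.
have -> : - mk ((1 : PX), 0, 0, 1) = mk (1, 0, 0, 1).
  by apply/matrixP => i j; rewrite !mxE.
split; first by case=> /mk_inj.
by move=> ->; left.
Qed.

Definition stb (x : q4 pb) (a : pb) : q4 pb :=
  let '(p, q, r, t) := x in (addp (mulp a p) r, addp (mulp a q) t, p, q).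
Definition enc4 (x : q4 PX) : q4 pb :=
  let '(p, q, r, t) := x in (enc p, enc q, enc r, enc t).
Lemma enc4_inj : injective enc4.
Proof.
move=> [[[p q] r] t] [[[p' q'] r'] t'] /= h.
have /enc_inj-> := congr1 (fun x : q4 pb => x.1.1.1) h.
have /enc_inj-> := congr1 (fun x : q4 pb => x.1.1.2) h.
have /enc_inj-> := congr1 (fun x : q4 pb => x.1.2) h.
by have /enc_inj-> := congr1 (fun x : q4 pb => x.2) h.
Qed.
Lemma foldl_enc (s : seq PX) x :
  enc4 (foldl (@st _) x s) = foldl stb (enc4 x) (map enc s).
Proof.
elim: s x => [|a s IH] x //=; rewrite IH; congr foldl.
case: x => [[[p q] r] t] /=.
by rewrite !encD !PXoppE !encM.
Qed.
Definition idb : q4 pb := ((true,true),(false,false),(false,false),(true,true)).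
Definition qb (e : seq pb) : bool := foldl stb idb e == idb.

Lemma quidP (s : seq PX) : lambda_quiddity s <-> qb (map enc s).
Proof.
rewrite /qb.
have E : enc4 (1, 0, 0, 1) = idb by rewrite /= enc1 enc0.
rewrite -E -foldl_enc; split; first by move/quid_st=> ->.
by move/eqP/enc4_inj/quid_st.
Qed.

Definition enum_pb : seq pb := [:: (true,true);(true,false);(false,true);(false,false)].
Fixpoint all_seqs n : seq (seq pb) :=
  if n is n'.+1 then [seq x :: s | x <- enum_pb, s <- all_seqs n'] else [:: [::]].
Lemma mem_all_seqs (e : seq pb) : e \in all_seqs (size e).
Proof.
elim: e => [|x e IH] //=.
by move: x => [[] []]; rewrite !mem_cat (map_f (cons _) IH) ?orbT.
Qed.
Lemma enum_check n (P : pred (seq pb)) :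
  all P (all_seqs n) -> forall e, size e = n -> P e.
Proof. by move=> /allP H e He; apply: H; rewrite -He; apply: mem_all_seqs. Qed.

Lemma red_of (c : seq PX) k x mid y (b : seq PX) :
  lambda_quiddity c -> (3 <= size c)%N -> (1 <= size mid)%N -> (3 <= size b)%N ->
  lambda_quiddity b ->
  rot k c = x :: mid ++ y :: take (size b - 2) (drop 1 b) -> reducible c.
Proof.
move=> qc sc smid sb qb' E.
split=> //; split=> //.
pose a := (x - b`_(size b).-1) :: rcons mid (y - b`_0).
exists a, b; split => //.
  by rewrite /a /= size_rcons !ltnS.
exists k; left; rewrite E /oplus /a /=.
rewrite size_rcons subrK.
have -> : ((size mid).+2 - 2 = size mid)%N by rewrite subn2.
by rewrite drop0 -cats1 take_size_cat //= nth_cat ltnn subnn /= subrK.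
Qed.

Lemma encX : enc sX = (true, true). Proof. by rewrite -[sX]/(dec (true,true)) encK. Qed.
Lemma encA : enc sa = (true, false). Proof. by rewrite -[sa]/(dec (true,false)) encK. Qed.
Lemma encB : enc sb = (false, true). Proof. by rewrite -[sb]/(dec (false,true)) encK. Qed.
Lemma encE : enc sE = (false, false). Proof. by rewrite -[sE]/(dec (false,false)) encK. Qed.

Definition TT : pb := (true,true).
Definition TF : pb := (true,false).
Definition FT : pb := (false,true).
Definition FF : pb := (false,false).

Definition listb : seq (seq pb) :=
  [:: [:: TT; TT; TT]; [:: TF; FT; TF; FT]; [:: FF; FF; FF; FF];
      [:: TF; FF; TF; FF]; [:: FT; FF; FT; FF];
      [:: TF; TF; TF; TF; TF; TF]; [:: FT; FT; FT; FT; FT; FT]].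

Definition theList : seq (seq PX) := [:: [:: sX; sX; sX];
                       [:: sa; sb; sa; sb];
                       [:: sE; sE; sE; sE];
                       [:: sa; sE; sa; sE];
                       [:: sb; sE; sb; sE];
                       [:: sa; sa; sa; sa; sa; sa];
                       [:: sb; sb; sb; sb; sb; sb]].

Lemma theListE : theList = map (map dec) listb. Proof. by []. Qed.

Definition targetb (e : seq pb) : bool :=
  has (fun t => has (fun k => e == rot k t) (iota 0 (size t))) listb.

Lemma targetP (c : seq PX) : targetb (map enc c) ->
  exists2 t, t \in theList & exists k, c = rot k t.
Proof.
case/hasP => t tin /hasP [k _ /eqP E].
exists (map dec t); first by rewrite theListE; apply: map_f.
exists k; by rewrite -map_rot -E (mapK decK).
Qed.

Definition midb (e : seq pb) := take (size e - 2) (drop 1 e).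

Lemma Lmid (eb : seq pb) : (3 <= size eb <= 5)%N -> qb eb ->
  [&& (size eb == 3%N) ==> (midb eb == [:: TT]),
      ~~ all (pred1 TF) (midb eb) & ~~ all (pred1 FT) (midb eb)].
Proof.
move=> /andP [h1 h2] q.
have : (size eb == 3%N) || (size eb == 4%N) || (size eb == 5%N).
  by move: h1 h2; case: (size eb) => [|[|[|[|[|[|n]]]]]].
case/orP => [/orP [] | ] /eqP H.
- by move: q; apply/implyP; apply: (enum_check (P := fun e => qb e ==> [&& (size e == 3%N) ==> (midb e == [:: TT]),
      ~~ all (pred1 TF) (midb e) & ~~ all (pred1 FT) (midb e)]) _ H); vm_compute.
- by move: q; apply/implyP; apply: (enum_check (P := fun e => qb e ==> [&& (size e == 3%N) ==> (midb e == [:: TT]),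
      ~~ all (pred1 TF) (midb e) & ~~ all (pred1 FT) (midb e)]) _ H); vm_compute.
- by move: q; apply/implyP; apply: (enum_check (P := fun e => qb e ==> [&& (size e == 3%N) ==> (midb e == [:: TT]),
      ~~ all (pred1 TF) (midb e) & ~~ all (pred1 FT) (midb e)]) _ H); vm_compute.
Qed.

Definition goodb (e : seq pb) : bool :=
  [&& all (fun k => qb (rot k e)) (iota 0 (size e)), (3 <= size e)%N &
   (size e == 3%N) || ((size e == 4%N) && (TT \notin e)) ||
   ((size e == 6%N) && (all (pred1 TF) e || all (pred1 FT) e))].

Lemma goodb_list : all goodb listb. Proof. by vm_compute. Qed.

Lemma size_oplus (a b : seq PX) : (2 <= size a)%N -> (2 <= size b)%N ->
  size (oplus a b) = (size a + size b - 2)%N.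
Proof.
move=> ha hb; rewrite /oplus /= size_cat /= !size_take !size_drop.
case: (size a) ha => [|[|m]] // _; case: (size b) hb => [|[|l]] // _.
by rewrite !subSS !subn0 !ltnSn -addnS.
Qed.

Lemma oplus_mid (a b : seq PX) :
  exists pre, oplus a b = pre ++ take (size b - 2) (drop 1 b).
Proof. by rewrite /oplus; eexists; rewrite !catA. Qed.

Lemma listed_irr (t : seq PX) k : t \in theList -> irreducible (rot k t).
Proof.
rewrite theListE => /mapP [e ein ->].
have /andP [hq /andP [hs hc]] := allP goodb_list e ein.
set c := rot k (map dec e).
have Ec : map enc c = rot k e by rewrite map_rot (mapK encK).
have qc : lambda_quiddity c.
  apply/quidP; rewrite Ec.
  case: (ltnP k (size e)) => hk.
    by apply: (allP hq); rewrite mem_iota.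
  rewrite rot_oversize //.
  have := allP hq 0%N; rewrite rot0 mem_iota add0n; apply.
  by rewrite (leq_trans _ hs).
have sc : size c = size e by rewrite size_rot size_map.
split=> //; split; first by rewrite sc.
case=> _ [_ [a [b [sa3 sb3 qb3 [j Ej]]]]].
have memE : forall p, p \in take (size b - 2) (drop 1 (map enc b)) -> p \in e.
  move=> p; rewrite -map_drop -map_take => hp.
  have [pre Eo] := oplus_mid a b.
  have : p \in map enc (oplus a b) by rewrite Eo map_cat mem_cat hp orbT.
  case: Ej => ->; rewrite map_rot mem_rot ?map_rev ?mem_rev Ec mem_rot //.
have szo : size (oplus a b) = size e.
  by case: Ej => ->; rewrite size_rot ?size_rev sc.
rewrite size_oplus ?(ltnW sa3) ?(ltnW sb3) // in szo.
have hb : (size b <= size e - 1)%N.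
  by rewrite -szo; move: sa3; case: (size a) => [|[|[|m]]] //= _; rewrite addSn !subn2 /= subn1 /= addnC leq_addr.
have qbb := (quidP b).1 qb3.
have Lm := fun h => Lmid (eb := map enc b) h qbb.
rewrite /midb !size_map in Lm.
have /orP [/orP [/eqP H3 | /andP [/eqP H4 nTT]] | /andP [/eqP H6 hall]] := hc.
- by move: hb sb3; rewrite H3 => hb sb; move: (leq_trans sb hb).
- have Hb3 : size b = 3%N by apply/eqP; rewrite eqn_leq sb3 andbT; rewrite H4 in hb.
  rewrite Hb3 in Lm memE.
  have /andP [/eqP hmid _] := Lm isT.
  move: (memE TT); rewrite hmid inE eqxx => /(_ isT).
  by rewrite (negbTE nTT).
- rewrite H6 in hb.
  have hb5 : (3 <= size b <= 5)%N by rewrite sb3.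
  have /and3P [_ h1 h2] := Lm hb5.
  case/orP: hall => /allP hall.
    by move/negP: h1; apply; apply/allP => p /memE /hall.
  by move/negP: h2; apply; apply/allP => p /memE /hall.
Qed.

Lemma dec_tail (s1 w : seq PX) : (3 <= size s1)%N ->
  exists x mid y, (1 <= size mid)%N /\ s1 ++ w = x :: mid ++ y :: w.
Proof.
case: s1 => [|x s2] //=; case/lastP: s2 => [|mid y] //=.
rewrite size_rcons ltnS => H; exists x, mid, y; split => //.
by rewrite cat_rcons.
Qed.

Lemma quidXXX : lambda_quiddity [:: sX; sX; sX].
Proof. by apply/quidP; rewrite /= encX. Qed.

Lemma RX (c : seq PX) : lambda_quiddity c -> (4 <= size c)%N -> sX \in c -> reducible c.
Proof.
move=> qc sc hX.
set i := index sX c.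
have hi : (i < size c)%N by rewrite index_mem.
have hci : c`_i = sX by rewrite nth_index.
have E : rot i.+1 c = (drop i.+1 c ++ take i c) ++ [:: sX].
  by rewrite /rot (take_nth 0 hi) hci -cats1 catA.
have [x [mid [y [hm E2]]]] := dec_tail [:: sX] (s1 := drop i.+1 c ++ take i c)
  (ltac:(rewrite size_cat size_drop size_take hi; move: hi sc; clear; move: (size c) => n; lia)).
apply: (red_of (k := i.+1) (x := x) (mid := mid) (y := y) (b := [:: sX; sX; sX])) => //.
- exact: ltnW.
- exact: quidXXX.
- by rewrite E E2.
Qed.

Lemma quid_pair (u v : PX) : u * v = 0 -> lambda_quiddity [:: v; u; v; u].
Proof.
move=> h; apply/quidP => /=.
have : mulp (enc u) (enc v) == (false, false) by rewrite -encM h enc0.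
by move: (enc u) (enc v) => [[] []] [[] []].
Qed.

Lemma RP (c : seq PX) i : lambda_quiddity c -> (5 <= size c)%N -> (i.+1 < size c)%N ->
  c`_i * c`_i.+1 = 0 -> reducible c.
Proof.
move=> qc sc hi h.
have E : rot i.+2 c = (drop i.+2 c ++ take i c) ++ [:: c`_i; c`_i.+1].
  rewrite /rot (take_nth 0 hi) (take_nth 0 (ltnW hi)) -!cats1 -!catA.
  by [].
have [x [mid [y [hm E2]]]] := dec_tail [:: c`_i; c`_i.+1] (s1 := drop i.+2 c ++ take i c)
  (ltac:(rewrite size_cat size_drop size_take (ltnW hi); move: hi sc; clear; move: (size c) => n; lia)).
apply: (red_of (k := i.+2) (x := x) (mid := mid) (y := y) (b := [:: c`_i.+1; c`_i; c`_i.+1; c`_i])) => //.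
- by apply: leq_trans sc.
- exact: quid_pair.
- by rewrite E E2.
Qed.

Lemma EL (u v : PX) : u * v != 0 -> u != sX -> v != sX -> u = v /\ (u = sa \/ u = sb).
Proof.
move=> h1 h2 h3.
have h1' : mulp (enc u) (enc v) != (false, false).
  by apply: contra h1 => /eqP h; apply/eqP; apply: enc_inj; rewrite encM h enc0.
have h2' : enc u != (true, true) by apply: contra h2 => /eqP h; apply/eqP; apply: enc_inj; rewrite h encX.
have h3' : enc v != (true, true) by apply: contra h3 => /eqP h; apply/eqP; apply: enc_inj; rewrite h encX.
have key : forall p q : pb, mulp p q != (false, false) -> p != (true, true) -> q != (true, true) ->
   p = q /\ (p = (true, false) \/ p = (false, true)).
  by move=> [[] []] [[] []]; auto.
have [e1 e2] := key _ _ h1' h2' h3'.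
split; first exact: enc_inj.
by case: e2 => e; [left | right]; apply: enc_inj; rewrite e ?encA ?encB.
Qed.

Lemma const_case (c : seq PX) : (2 <= size c)%N -> sX \notin c ->
  (forall i, (i.+1 < size c)%N -> c`_i * c`_i.+1 != 0) ->
  exists z, (z = sa \/ z = sb) /\ c = nseq (size c) z.
Proof.
move=> sc nX hp.
have nX' : forall i, (i < size c)%N -> c`_i != sX.
  by move=> i hi; apply: contraNneq nX => <-; apply: mem_nth.
have all0 : forall i, (i < size c)%N -> c`_i = c`_0.
  elim=> [|i IH] hi //.
  rewrite -IH ?(ltnW hi) //.
  by have [-> _] := EL (hp i hi) (nX' _ (ltnW hi)) (nX' _ hi).
exists c`_0; split.
  by have [_ h] := EL (hp 0%N sc) (nX' _ (ltnW sc)) (nX' _ sc).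
apply: (eq_from_nth (x0 := 0)); first by rewrite size_nseq.
by move=> i hi; rewrite nth_nseq hi all0.
Qed.

Lemma nseq_quid (z : PX) n : (z = sa \/ z = sb) -> lambda_quiddity (nseq n z) ->
  n = 5%N -> False.
Proof.
move=> hz /quidP q hn; subst n; move: q; rewrite map_nseq.
by case: hz => ->; rewrite ?encA ?encB; vm_compute.
Qed.

Lemma nseq6_quid (z : PX) : (z = sa \/ z = sb) -> lambda_quiddity (nseq 6 z).
Proof. by move=> hz; apply/quidP; rewrite map_nseq; case: hz => ->; rewrite ?encA ?encB; vm_compute. Qed.

Lemma nseq_red (z : PX) n : (z = sa \/ z = sb) -> lambda_quiddity (nseq n z) ->
  (7 <= n)%N -> reducible (nseq n z).
Proof.
move=> hz q hn.
apply: (red_of (k := 0) (x := z) (mid := nseq (n - 6) z) (y := z) (b := nseq 6 z)) => //.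
- by rewrite size_nseq; apply: leq_trans hn.
- by rewrite size_nseq subn_gt0; apply: leq_trans hn.
- exact: nseq6_quid.
- rewrite rot0 /=.
  have hn' : n = ((n - 6).+1 + 5)%N by move: hn; clear; lia.
  by rewrite {1}hn' nseqD.
Qed.

Lemma L3 (e : seq pb) : size e = 3%N -> qb e -> targetb e.
Proof. by move=> h; apply/implyP; apply: (enum_check (P := fun e => qb e ==> targetb e) _ h); vm_compute. Qed.
Lemma L4 (e : seq pb) : size e = 4%N -> qb e -> TT \notin e -> targetb e.
Proof.
move=> h q nT.
have H : all (fun e => qb e ==> (TT \notin e) ==> targetb e) (all_seqs 4) by vm_compute.
by move: (enum_check H h); rewrite q nT.
Qed.

Theorem proposition3p6 (c : seq PX) :
  irreducible c <->
  exists2 t, t \in [:: [:: sX; sX; sX];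
                       [:: sa; sb; sa; sb];
                       [:: sE; sE; sE; sE];
                       [:: sa; sE; sa; sE];
                       [:: sb; sE; sb; sE];
                       [:: sa; sa; sa; sa; sa; sa];
                       [:: sb; sb; sb; sb; sb; sb]]
  & exists k, c = rot k t.
Proof.
split; last by move=> [t tin [k ->]]; apply: listed_irr.
move=> [qc [sc nred]].
have qe := (quidP c).1 qc.
have {sc} sc : (2 < @size PX c)%N := sc.
case: (eqVneq (size c) 3%N) => h3; move/eqP: (h3) => h3'.
  by apply: targetP; apply: L3; rewrite ?size_map.
have sc4 : (4 <= size c)%N by lia.
case: (boolP (sX \in c)) => hX.
  by exfalso; apply: nred; apply: RX.
case: (eqVneq (size c) 4%N) => h4; move/eqP: (h4) => h4'.
  apply: targetP; apply: L4; rewrite ?size_map //.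
  apply/negP => /mapP [x xin ex]; move/negP: hX; apply.
  by have <- : x = sX by apply: enc_inj; rewrite encX.
have sc5 : (5 <= size c)%N by lia.
case: (boolP (has (fun i => c`_i * c`_i.+1 == 0) (iota 0 (size c).-1))) => hp.
  case/hasP: hp => i; rewrite mem_iota add0n => hi /eqP h.
  exfalso; apply: nred; apply: (RP (i := i)) => //.
  by lia.
have hp' : forall i, (i.+1 < size c)%N -> c`_i * c`_i.+1 != 0.
  move=> i hi; move/hasPn: hp; apply; rewrite mem_iota add0n.
  by lia.
have [z [hz Ec]] := const_case (ltnW sc) hX hp'.
rewrite Ec in qc nred.
case: (eqVneq (size c) 5%N) => h5; move/eqP: (h5) => h5'.
  by exfalso; apply: (nseq_quid hz qc).
case: (eqVneq (size c) 6%N) => h6; move/eqP: (h6) => h6'.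
  apply: targetP; rewrite Ec h6 map_nseq.
  by case: hz => ->; rewrite ?encA ?encB; vm_compute.
exfalso; apply: nred; apply: nseq_red => //.
by lia.
Qed.
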